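(* Let $\mathcal{A}$ be a finite-dimensional real associative unital algebra with a norm, let $U$ be an open connected subset of $\mathcal{A}$, and let $f_n:U\to\mathcal{A}$ be $\mathcal{A}$-differentiable on $U$ for each $n\in\mathbb{N}$. Suppose that (i) there exists a point $z_0\in U$ such that the sequence $\{f_n(z_0)\}$ converges in $\mathcal{A}$, and (ii) for every $a\in U$ there is an open ball $B(a)$ centered at $a$, contained in $U$, on which the sequence of derivatives $\{f_n'\}$ converges uniformly. Then for each $a\in U$ the sequence $\{f_n\}$ converges uniformly on $B(a)$; moreover, setting $f(z)=\lim_{n\to\infty}f_n(z)$ and $g(z)=\lim_{n\to\infty}f_n'(z)$ for $z\in U$, the function $f$ is $\mathcal{A}$-differentiable on $U$ and $f'(z)=g(z)$ for each $z\in U$.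
   Context: A linear map $T:\mathcal{A}\to\mathcal{A}$ is right $\mathcal{A}$-linear if $T(x\star y)=T(x)\star y$ for all $x,y$. A function $f$ on an open set containing $p$ is $\mathcal{A}$-differentiable at $p$ if there is a right $\mathcal{A}$-linear map $d_pf$ with $\lim_{h\to0}\frac{f(p+h)-f(p)-d_pf(h)}{\|h\|}=0$ (i.e. $f$ is Fréchet differentiable at $p$ with right $\mathcal{A}$-linear differential). Its $\mathcal{A}$-derivative is $f'(p)=d_pf(1)$, where $1$ is the unit. *)

(* Defs.v *)
From HB Require Import structures.
From mathcomp Require Import all_boot all_order all_algebra.
From mathcomp Require Import all_classical all_reals all_analysis.
Set Implicit Arguments. Unset Strict Implicit. Unset Printing Implicit Defensive.
Import Order.TTheory GRing.Theory Num.Theory.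
Import numFieldNormedType.Exports.
Local Open Scope classical_set_scope.
Local Open Scope ring_scope.

Definition finite_dim (R : realType) (A : normedModType R) : Prop :=
  exists (n : nat) (e : 'I_n -> A),
    forall x : A, exists c : 'I_n -> R, x = \sum_(i < n) c i *: e i.

Definition is_unital_algebra (R : realType) (A : normedModType R)
    (mul : A -> A -> A) (one : A) : Prop :=
  [/\ forall x y z, mul x (mul y z) = mul (mul x y) z,
      forall x, mul one x = x,
      forall x, mul x one = x,
      forall (a : R) x y z, mul (a *: x + y) z = a *: mul x z + mul y z &
      forall (a : R) x y z, mul z (a *: x + y) = a *: mul z x + mul z y].

Definition right_A_linear (R : realType) (A : normedModType R)
    (mul : A -> A -> A) (T : A -> A) : Prop :=
  forall x y, T (mul x y) = mul (T x) y.

Definition A_differentiable (R : realType) (A : normedModType R)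
    (mul : A -> A -> A) (f : A -> A) (p : A) : Prop :=
  differentiable f p /\ right_A_linear mul ('d f p).

Definition A_derivative (R : realType) (A : normedModType R)
    (one : A) (f : A -> A) (p : A) : A := 'd f p one.

Definition unif_cvg_on (R : realType) (A : normedModType R)
    (S : set A) (u : nat -> A -> A) : Prop :=
  exists g : A -> A, forall e : R, 0 < e -> exists N : nat,
    forall n : nat, (N <= n)%N -> forall z, S z -> `|u n z - g z| < e.

(* Main.v *)
Require Import Defs.
From HB Require Import structures.
From mathcomp Require Import all_boot all_order all_algebra.
From mathcomp Require Import all_classical all_reals all_analysis.
From mathcomp Require Import ring lra.
Set Implicit Arguments. Unset Strict Implicit. Unset Printing Implicit Defensive.
Import Order.TTheory GRing.Theory Num.Theory.
Import numFieldNormedType.Exports.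
Local Open Scope classical_set_scope.
Local Open Scope ring_scope.


Section LinCont.
Variables (R : realType) (V W : normedModType R).
Lemma lin_bound_cont (f : {linear V -> W}) (K : R) :
  (forall x, `|f x| <= K * `|x|) -> continuous f.
Proof.
move=> hK; apply/linear_bounded_continuous/linear_boundedP.
near=> r => x; rewrite (le_trans (hK x))// ler_wpM2r//.
Unshelve. all: by end_near. Qed.
End LinCont.

Section Basis.
Variables (R : realType) (A : normedModType R).
Definition spans n (e : 'I_n -> A) := forall x, exists c : 'I_n -> R, x = \sum_(i < n) c i *: e i.
Definition indep n (e : 'I_n -> A) := forall c : 'I_n -> R, \sum_(i < n) c i *: e i = 0 -> forall i, c i = 0.

Lemma basis_exists n (e : 'I_n -> A) : spans e -> exists m (e' : 'I_m -> A), spans e' /\ indep e'.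
Proof.
elim: n e => [|m IH] e he.
  by exists 0%N, e; split => // c _ [].
have [ind|nind] := pselect (indep e); first by exists m.+1, e.
have [c [hc [j cj]]] : exists c : 'I_m.+1 -> R, \sum_(i < m.+1) c i *: e i = 0 /\ exists j, c j <> 0.
  apply: contra_notP nind => H c hc i; apply: contra_notP H => ci.
  by exists c; split => //; exists i.
apply: (IH (e \o lift j)) => x.
have [d ->] := he x.
exists (fun i => d (lift j i) - d j * (c j)^-1 * c (lift j i)).
rewrite (bigD1_ord j) //=.
move: hc; rewrite (bigD1_ord j) //= => /eqP; rewrite addrC addr_eq0 => /eqP hc.
have -> : e j = - (c j)^-1 *: \sum_(i < m) c (lift j i) *: e (lift j i).
  by rewrite hc scalerN scaleNr opprK scalerA mulVf ?scale1r //; apply/eqP.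
rewrite scalerA scaler_sumr -big_split /=; apply: eq_bigr => i _.
rewrite scalerA -scalerDl; by congr (_ *: _); ring.
Qed.

Section Coords.
Variables (n : nat) (e : 'I_n -> A) (hsp : spans e) (hind : indep e).

Definition coord (x : A) : 'I_n -> R := projT1 (cid (hsp x)).
Lemma coordP x : x = \sum_(i < n) coord x i *: e i.
Proof. exact: (projT2 (cid (hsp x))). Qed.

Lemma coord_uniq x (c : 'I_n -> R) : x = \sum_(i < n) c i *: e i -> forall i, coord x i = c i.
Proof.
move=> hx i; apply/eqP; rewrite -subr_eq0; apply/eqP.
apply: (hind (c := fun i => coord x i - c i)) => //.
rewrite (eq_bigr (fun i => coord x i *: e i - c i *: e i)); last by move=> k _; rewrite scalerBl.
by rewrite sumrB -coordP -hx subrr.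
Qed.

Definition lam (i : 'I_n) (x : A) : R := coord x i.

Lemma lam_linear i : linear (lam i).
Proof.
move=> a x y; rewrite /lam (@coord_uniq _ (fun k => a * coord x k + coord y k)) //.
rewrite (eq_bigr (fun k => a *: (coord x k *: e k) + coord y k *: e k)); last first.
  by move=> k _; rewrite scalerDl scalerA.
by rewrite big_split /= -scaler_sumr -!coordP.
Qed.


Definition phi (v : 'rV[R]_n) : A := \sum_(i < n) v ord0 i *: e i.
Lemma phi_linear : linear phi.
Proof.
move=> a v w; rewrite /phi scaler_sumr -big_split /=; apply: eq_bigr => i _.
by rewrite !mxE scalerDl scalerA.
Qed.
HB.instance Definition _ := GRing.isLinear.Build R 'rV[R]_n A *:%R phi phi_linear.

Lemma entry_le (v : 'rV[R]_n) i : `|v ord0 i| <= `|v|.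
Proof.
rewrite [leRHS]/Num.norm /= mx_normrE.
by apply/bigmax_geP; right => /=; exists (ord0, i).
Qed.

Lemma phi_bound v : `|phi v| <= (\sum_(i < n) `|e i|) * `|v|.
Proof.
rewrite /phi mulrC mulr_sumr; apply: (le_trans (ler_norm_sum _ _ _)).
apply: ler_sum => i _; rewrite normrZ; apply: ler_wpM2r => //; exact: entry_le.
Qed.

Lemma phi_cont : continuous phi.
Proof. exact: (lin_bound_cont phi_bound). Qed.


Lemma phi_lower : exists2 m : R, 0 < m & forall v, m * `|v| <= `|phi v|.
Proof.
pose Sph := [set v : 'rV[R]_n | `|v| = 1].
have key : forall v, v != 0 -> Sph (`|v|^-1 *: v).
  move=> v v0; rewrite /Sph /= normrZ normfV normr_id mulVf //.
  by rewrite normr_eq0.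
have [[c0 Sc0]|Sph0] := pselect (Sph !=set0); last first.
  exists 1 => // v; have [->|v0] := eqVneq v 0; first by rewrite normr0 mulr0.
  by exfalso; apply: Sph0; exists (`|v|^-1 *: v); apply: key.
have cpt : compact Sph.
  apply: bounded_closed_compact.
    exists 1; split; first by rewrite num_real.
    by move=> M M1 v /= ->; apply: ltW.
  apply: (@preimage_closed _ _ (fun v : 'rV[R]_n => `|v|) [set 1]).
    by move=> x _; apply: norm_continuous.
  exact: closed_eq.
have [c /set_mem Sc cmin] : exists2 c, c \in Sph & forall t, t \in Sph -> `|phi c| <= `|phi t|.
  apply: (@EVT_min_rV R n (fun v => `|phi v|) Sph (ex_intro _ c0 Sc0) cpt).
  apply: continuous_subspaceT => v.
  by apply: continuous_comp; [apply: phi_cont|apply: norm_continuous].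
exists `|phi c|.
  rewrite normr_gt0; apply/eqP => pc0.
  have : c = 0.
    apply/rowP => i; rewrite mxE.
    by have := hind (c := fun i => c ord0 i) pc0 i; rewrite (ord1 _).
  by move=> c0'; move: Sc; rewrite /Sph /= c0' normr0 => /eqP; rewrite eq_sym oner_eq0.
move=> v; have [->|v0] := eqVneq v 0; first by rewrite normr0 mulr0 normr_ge0.
have := cmin _ (mem_set (key v v0)).
rewrite linearZ /= normrZ normfV normr_id ler_pdivlMl ?normr_gt0 //.
by rewrite mulrC.
Unshelve. all: by end_near. Qed.

End Coords.

Lemma fd_coords : finite_dim A -> exists n (e : 'I_n -> A) (lam : 'I_n -> {linear A -> R}) (K : R),
  [/\ 0 < K, (forall x, x = \sum_(i < n) lam i x *: e i) & (forall i x, `|lam i x| <= K * `|x|)].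
Proof.
move=> [n0 [e0 he0]].
have [n [e [hsp hind]]] := basis_exists (he0 : spans e0).
have [m m0 hm] := phi_lower hind.
exists n, e, (fun i => HB.pack (lam hsp i) (GRing.isLinear.Build R A R *:%R (lam hsp i) (lam_linear hsp hind i)) : {linear A -> R}), m^-1; split.
- by rewrite invr_gt0.
- by move=> x /=; rewrite /lam -coordP.
move=> i x /=; rewrite /lam.
pose v : 'rV[R]_n := \row_k coord hsp x k.
have -> : coord hsp x i = v ord0 i by rewrite mxE.
have phiv : phi e v = x by rewrite [RHS](coordP hsp) /phi; apply: eq_bigr => k _; rewrite mxE.
apply: (le_trans (entry_le v i)).
by rewrite ler_pdivlMl // -phiv.
Qed.

Lemma derive_along (g : A -> A) (L : {linear A -> R}) (Lc : continuous L) (x v : A) (t : R) :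
  differentiable g (x + t *: v) ->
  is_derive t 1 (fun s => L (g (x + s *: v))) (L ('d g (x + t *: v) v)).
Proof.
move=> hg.
have d1 : is_diff t (cst x + ( *:%R^~ v)) (0 + ( *:%R^~ v)) by apply: is_diffD.
have d2 : is_diff ((cst x + ( *:%R^~ v)) t) g ('d g (x + t *: v)) by apply: differentiableP.
have d3 : is_diff (g ((cst x + ( *:%R^~ v)) t)) L L.
  by apply: DiffDef; [apply: linear_differentiable|apply: diff_lin].
have d4 := is_diff_comp d1 (is_diff_comp d2 d3).
have hd : differentiable (L \o (g \o (cst x + ( *:%R^~ v)))) t by apply: ex_diff.
have hdv : derivable (L \o (g \o (cst x + ( *:%R^~ v)))) t 1 by apply: diff_derivable.
have := derivableP hdv.
rewrite deriveE // diff_val /=.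
have -> : (0 + ( *:%R^~ v) : R -> A) 1 = v by rewrite /= add0r scale1r.
by [].
Qed.
End Basis.


Section FD.
Variables (R : realType) (A : normedModType R).

Lemma cvg_bigsum {T} (F : set_system T) {FF : Filter F} n (u : 'I_n -> T -> A) (l : 'I_n -> A) :
  (forall i, u i @ F --> l i) -> (fun t => \sum_(i < n) u i t) @ F --> \sum_(i < n) l i.
Proof.
elim: n u l => [|n IH] u l hu.
  under eq_fun do rewrite big_ord0.
  by rewrite big_ord0; apply: cvg_cst.
under eq_fun do rewrite big_ord_recr /=.
rewrite big_ord_recr /=.
apply: (cvgD (IH (fun i => u (widen_ord (leqnSn n) i)) (fun i => l (widen_ord (leqnSn n) i)) _) (hu _)).
by move=> i; apply: hu.
Qed.

Variables (n : nat) (e : 'I_n -> A) (lam : 'I_n -> {linear A -> R}) (K : R).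
Hypotheses (hK : 0 < K) (hx : forall x, x = \sum_(i < n) lam i x *: e i)
  (hb : forall i x, `|lam i x| <= K * `|x|).

Lemma lam_cont i : continuous (lam i).
Proof. exact: (lin_bound_cont (hb i)). Qed.

Lemma norm_coords x : `|x| <= \sum_(i < n) `|lam i x| * `|e i|.
Proof.
rewrite {1}(hx x); apply: (le_trans (ler_norm_sum _ _ _)).
by apply: ler_sum => i _; rewrite normrZ.
Qed.

Lemma cauchyA (u : nat -> A) :
  (forall eps, 0 < eps -> exists N, forall p, (N <= p)%N -> `|u p - u N| < eps) ->
  cvg (u @ \oo).
Proof.
move=> hc.
have hci : forall i, cvg ((fun p => lam i (u p)) @ \oo).
  move=> i; apply: cauchy_cvg; apply: cauchy_exP => eps eps0.
  have [N hN] := hc (eps / K) (divr_gt0 eps0 hK).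
  exists (lam i (u N)); exists N => // p /= hp.
  rewrite /ball /= -linearB /= -opprB linearN normrN.
  apply: (le_lt_trans (hb _ _)).
  by rewrite -ltr_pdivlMl // mulrC; apply: hN.
pose l i := lim ((fun p => lam i (u p)) @ \oo).
have hl : forall i, (fun p => lam i (u p)) @ \oo --> l i by move=> i; apply: hci.
apply/cvg_ex; exists (\sum_(i < n) l i *: e i).
have -> : u = fun p => \sum_(i < n) lam i (u p) *: e i by apply: funext => p; apply: hx.
apply: cvg_bigsum => i.
by apply: cvgZ; [exact: hl | exact: cvg_cst].
Qed.

Lemma mvi (g : A -> A) (x y : A) (eps : R) :
  (forall t : R, 0 <= t <= 1 -> differentiable g (x + t *: (y - x)) /\
      `|'d g (x + t *: (y - x)) (y - x)| <= eps) ->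
  `|g y - g x| <= (K * \sum_(i < n) `|e i|) * eps.
Proof.
move=> hg.
have hi : forall i, `|lam i (g y - g x)| <= K * eps.
  move=> i.
  pose psi t := lam i (g (x + t *: (y - x))).
  pose dpsi t := lam i ('d g (x + t *: (y - x)) (y - x)).
  have hder : forall t : R, 0 <= t <= 1 -> is_derive t 1 psi (dpsi t).
    move=> t ht; have [dg _] := hg t ht.
    rewrite /psi /dpsi; exact: (derive_along (@lam_cont i) dg).
  have [c cab hc] : exists2 c, c \in `[0, 1]%R & psi 1 - psi 0 = dpsi c * (1 - 0).
    apply: MVT_segment => //.
      move=> t; rewrite in_itv /= => /andP [t0 t1]; apply: hder.
      by rewrite !ltW.
    apply: continuous_in_subspaceT => t; rewrite inE /= in_itv /= => ht.
    have := hder t ht => hd.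
    apply: differentiable_continuous.
    by apply/derivable1_diffP; apply: ex_derive.
  move: hc; rewrite /psi subr0 mulr1 scale1r scale0r addr0 subrKC => hc.
  rewrite linearB /= hc.
  move: cab; rewrite in_itv /= => hcab.
  apply: (le_trans (hb _ _)); apply: ler_wpM2l; first exact: ltW.
  by have [_ ] := hg c hcab.
apply: (le_trans (norm_coords _)).
apply: (le_trans (ler_sum _ (fun i _ => ler_wpM2r (normr_ge0 (e i)) (hi i)))).
by rewrite -mulr_sumr mulrAC.
Qed.
End FD.


Section Alg.
Variables (R : realType) (A : normedModType R) (mul : A -> A -> A) (one : A).
Hypothesis halg : is_unital_algebra mul one.

Lemma mull_lin y : linear (fun x => mul x y).
Proof. by case: halg => _ _ _ h _ a u v; apply: h. Qed.
Lemma mulr_lin y : linear (mul y).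
Proof. by case: halg => _ _ _ _ h a u v; apply: h. Qed.

Definition ML y : {linear A -> A} := HB.pack (fun x => mul x y) (GRing.isLinear.Build R A A *:%R _ (mull_lin y)).
Definition MR y : {linear A -> A} := HB.pack (mul y) (GRing.isLinear.Build R A A *:%R _ (mulr_lin y)).

Lemma mulBl x z y : mul (x - z) y = mul x y - mul z y.
Proof. by have := linearB (ML y) x z. Qed.
Lemma mulBr y x z : mul y (x - z) = mul y x - mul y z.
Proof. by have := linearB (MR y) x z. Qed.
Lemma mulZr y (a : R) x : mul y (a *: x) = a *: mul y x.
Proof. by have := linearZZ (MR y) a x. Qed.

Lemma mul_suml n (c : 'I_n -> R) (a : 'I_n -> A) y :
  mul (\sum_(i < n) c i *: a i) y = \sum_(i < n) c i *: mul (a i) y.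
Proof.
have -> : mul (\sum_(i < n) c i *: a i) y = ML y (\sum_(i < n) c i *: a i) by [].
by rewrite linear_sum; apply: eq_bigr => i _; rewrite linearZ.
Qed.
Lemma mul_sumr n (c : 'I_n -> R) (a : 'I_n -> A) y :
  mul y (\sum_(i < n) c i *: a i) = \sum_(i < n) c i *: mul y (a i).
Proof.
have -> : mul y (\sum_(i < n) c i *: a i) = MR y (\sum_(i < n) c i *: a i) by [].
by rewrite linear_sum; apply: eq_bigr => i _; rewrite linearZ.
Qed.

Variables (n : nat) (e : 'I_n -> A) (lam : 'I_n -> {linear A -> R}) (K : R).
Hypotheses (hK : 0 < K) (hx : forall x, x = \sum_(i < n) lam i x *: e i)
  (hb : forall i x, `|lam i x| <= K * `|x|).

Lemma mul_bound : exists2 C : R, 0 < C & forall x y, `|mul x y| <= C * `|x| * `|y|.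
Proof.
pose M := \sum_(i < n) \sum_(j < n) `|mul (e i) (e j)|.
have M0 : 0 <= M by apply: sumr_ge0 => i _; apply: sumr_ge0 => j _.
exists (K * K * M + 1); first by apply: ltr_wpDl => //; apply: mulr_ge0 => //; apply: mulr_ge0; apply: ltW.
move=> x y.
apply: (@le_trans _ _ (K * K * M * `|x| * `|y|)); last first.
  by apply: ler_wpM2r => //; apply: ler_wpM2r => //; rewrite lerDl.
rewrite {1}(hx x) mul_suml.
apply: (le_trans (ler_norm_sum _ _ _)).
have -> : K * K * M * `|x| * `|y| = \sum_(i < n) (K * `|x|) * \sum_(j < n) (K * `|y|) * `|mul (e i) (e j)|.
  apply/esym; under eq_bigr do rewrite -mulr_sumr mulrA.
  rewrite -mulr_sumr /M; ring.
apply: ler_sum => i _; rewrite normrZ; apply: ler_pM => //.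
rewrite {1}(hx y) mul_sumr.
apply: (le_trans (ler_norm_sum _ _ _)).
apply: ler_sum => j _; rewrite normrZ; apply: ler_wpM2r => //.
Qed.
End Alg.


Section Helpers.
Variables (R : realType) (A : normedModType R).

Lemma ball_conv (a x y : A) (r t : R) : ball a r x -> ball a r y -> 0 <= t <= 1 ->
  ball a r (x + t *: (y - x)).
Proof.
rewrite -!ball_normE /= => hx hy /andP [t0 t1].
have -> : a - (x + t *: (y - x)) = (1 - t) *: (a - x) + t *: (a - y).
  have hyx : y - x = (a - x) - (a - y).
    by rewrite opprB [RHS]addrC addrA subrK.
  by rewrite hyx opprD addrA scalerBr opprB addrA scalerBl scale1r addrAC.
apply: (le_lt_trans (ler_normD _ _)); rewrite !normrZ !ger0_norm ?subr_ge0 //.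
set u := `|a - x|; set w := `|a - y|.
have hm : Num.max u w < r by rewrite gt_max hx hy.
apply: (le_lt_trans _ hm).
have e1 : (1 - t) * u <= (1 - t) * Num.max u w.
  by apply: ler_wpM2l; [rewrite subr_ge0 | rewrite le_max lexx].
have e2 : t * w <= t * Num.max u w by apply: ler_wpM2l => //; rewrite le_max lexx orbT.
lra.
Qed.

Lemma cvg_cauchy_seq (u : nat -> A) (l : A) : u @ \oo --> l ->
  forall eps, 0 < eps -> exists N, forall p q, (N <= p)%N -> (N <= q)%N -> `|u p - u q| < eps.
Proof.
move=> /cvgrPdist_lt hu eps eps0.
have [N _ hN] := hu (eps / 2) (divr_gt0 eps0 (ltr0Sn _ 1)).
exists N => p q hp hq.
have -> : u p - u q = (l - u q) - (l - u p) by rewrite opprB [RHS]addrC addrA subrK.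
apply: (le_lt_trans (ler_normB _ _)).
by rewrite [eps](splitr eps); apply: ltrD; apply: hN.
Qed.

Lemma lim_norm_le (u : nat -> A) (l : A) (c : R) : u @ \oo --> l ->
  (exists N, forall q, (N <= q)%N -> `|u q| <= c) -> `|l| <= c.
Proof.
move=> hu [N hN].
have hn : `|u q| @[q --> \oo] --> `|l| by apply: cvg_norm.
rewrite -(cvg_lim _ hn) //.
apply: limr_le; first by apply/cvg_ex; exists `|l|.
by exists N => // q /= hq; apply: hN.
Qed.

Lemma unif_cvg_pt (B : set A) (u : nat -> A -> A) (g : A -> A) :
  (forall eps : R, 0 < eps -> exists N : nat, forall k, (N <= k)%N -> forall z, B z -> `|u k z - g z| < eps) ->
  forall z, B z -> u k z @[k --> \oo] --> g z.
Proof.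
move=> hu z Bz; apply/cvgrPdist_lt => eps eps0.
have [N hN] := hu eps eps0.
by exists N => // k /= hk; rewrite distrC; apply: hN.
Qed.
End Helpers.


Lemma id3 (V : zmodType) (a b c p q d : V) :
  a - (b + c) = ((a - p) - (b - q)) + (p - (q + d)) + (d - c).
Proof.
rewrite !opprD ?opprB !addrA opprK subrK.
rewrite [X in _ = X - c]addrAC addrK.
by rewrite [X in _ = X - c]addrAC subrK.
Qed.

Lemma small_frac (R : realType) (c d : R) : 0 < c -> 0 <= d -> c / (d + 1) * d < c.
Proof.
move=> c0 d0; rewrite mulrAC ltr_pdivrMr; last by rewrite ltr_wpDl.
by rewrite mulrDr mulr1 ltrDl.
Qed.

Theorem theorem5p19 (R : realType) (A : normedModType R)
    (mul : A -> A -> A) (one : A)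
    (hfd : finite_dim A) (halg : is_unital_algebra mul one)
    (U : set A) (hUo : open U) (hUc : connected U)
    (f : nat -> A -> A)
    (hf : forall n z, U z -> A_differentiable mul (f n) z)
    (z0 : A) (hz0 : U z0) (hcv0 : cvg (f n z0 @[n --> \oo]))
    (hB : forall a, U a -> exists2 r : R, 0 < r &
            ball a r `<=` U /\
            unif_cvg_on (ball a r) (fun n z => A_derivative one (f n) z)) :
  (forall a (r : R), U a -> 0 < r -> ball a r `<=` U ->
     unif_cvg_on (ball a r) (fun n z => A_derivative one (f n) z) ->
     unif_cvg_on (ball a r) f) /\
  exists (F G : A -> A),
    (forall z, U z -> f n z @[n --> \oo] --> F z) /\
    (forall z, U z -> A_derivative one (f n) z @[n --> \oo] --> G z) /\
    (forall z, U z -> A_differentiable mul F z /\ A_derivative one F z = G z).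
Proof.
have [n [e [lam [K [hK hx hb]]]]] := fd_coords hfd.
have [C C0 hC] := mul_bound halg hK hx hb.
pose fp k z := A_derivative one (f k) z.
have dform : forall k z h, U z -> 'd (f k) z h = mul (fp k z) h.
  move=> k z h Uz; have [_ rl] := hf k z Uz.
  case: halg => _ h1 _ _ _.
  by rewrite /fp /A_derivative -rl h1.
have S0 : 0 <= \sum_(i < n) `|e i| by apply: sumr_ge0.
have L1 : forall a r, 0 < r -> ball a r `<=` U -> unif_cvg_on (ball a r) fp ->
   forall eps, 0 < eps -> exists N, forall p q, (N <= p)%N -> (N <= q)%N ->
     forall x y, ball a r x -> ball a r y ->
       `|(f p y - f q y) - (f p x - f q x)| <= eps * `|y - x|.
  move=> a r r0 sub [gl hgl] eps eps0.
  pose D := K * (\sum_(i < n) `|e i|) * C * 2 + 1.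
  have D0 : 0 < D.
    apply: ltr_wpDl => //; apply: mulr_ge0 => //; apply: mulr_ge0; last exact: ltW.
    by apply: mulr_ge0 => //; apply: ltW.
  have [N hN] := hgl (eps / D) (divr_gt0 eps0 D0).
  exists N => p q hp hq x y Bx By.
  have := mvi hK hx hb (g := f p - f q) (x := x) (y := y) (eps := C * (2 * (eps / D)) * `|y - x|).
  move=> H; apply: le_trans (H _) _.
    move=> t ht.
    have Bz := ball_conv Bx By ht.
    have Uz := sub _ Bz.
    have dp := (hf p _ Uz).1; have dq := (hf q _ Uz).1.
    split; first exact: differentiableB.
    rewrite diffB // /= !dform // -(mulBl halg).
    apply: (le_trans (hC _ _)); apply: ler_wpM2r => //; apply: ler_wpM2l; first exact: ltW.
    have h1 := hN p hp _ Bz; have h2 := hN q hq _ Bz.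
    have -> : fp p (x + t *: (y - x)) - fp q (x + t *: (y - x)) =
      (fp p (x + t *: (y - x)) - gl (x + t *: (y - x))) - (fp q (x + t *: (y - x)) - gl (x + t *: (y - x))).
      by rewrite opprB addrA subrK.
    apply: (le_trans (ler_normB _ _)); lra.
  rewrite mulrA; apply: ler_wpM2r => //.
  rewrite (_ : K * (\sum_(i < n) `|e i|) * (C * (2 * (eps / D))) = (K * (\sum_(i < n) `|e i|) * C * 2) * eps / D); last by ring.
  rewrite ler_pdivrMr // [_ * eps]mulrC; apply: ler_wpM2l; first exact: ltW.
  by rewrite /D lerDl.
have L2 : forall a r, 0 < r -> ball a r `<=` U -> unif_cvg_on (ball a r) fp ->
    forall p x, ball a r p -> ball a r x -> cvg (f k p @[k --> \oo]) -> cvg (f k x @[k --> \oo]).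
  move=> a r r0 sub hu p x Bp Bx hp.
  apply: (cauchyA hK hx hb) => eps eps0.
  have e20 : 0 < eps / 2 by apply: divr_gt0.
  have [N1 hN1] := cvg_cauchy_seq hp e20.
  have nx0 : 0 <= `|x - p| by [].
  have [N2 hN2] := L1 a r r0 sub hu (eps / 2 / (`|x - p| + 1)) (divr_gt0 e20 (ltr_wpDl nx0 ltr01)).
  exists (maxn N1 N2) => k hk.
  have hk1 : (N1 <= k)%N by apply: leq_trans hk; apply: leq_maxl.
  have hk2 : (N2 <= k)%N by apply: leq_trans hk; apply: leq_maxr.
  have hm1 : (N1 <= maxn N1 N2)%N by apply: leq_maxl.
  have hm2 : (N2 <= maxn N1 N2)%N by apply: leq_maxr.
  have t1 := hN2 k (maxn N1 N2) hk2 hm2 p x Bp Bx.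
  have t2 := hN1 k (maxn N1 N2) hk1 hm1.
  have t3 := small_frac e20 nx0.
  set N := maxn N1 N2 in t1 t2 *.
  have -> : f k x - f N x = (f k x - f N x - (f k p - f N p)) + (f k p - f N p) by rewrite subrK.
  apply: (le_lt_trans (ler_normD _ _)).
  rewrite [eps](splitr eps); apply: ler_ltD => //.
  exact: (le_trans t1 (ltW t3)).
have L3 : forall z, U z -> cvg (f k z @[k --> \oo]).
  pose P := fun b : A * R => 0 < b.2 /\ ball b.1 b.2 `<=` U /\ unif_cvg_on (ball b.1 b.2) fp.
  pose S := [set z | U z /\ cvg (f k z @[k --> \oo])].
  suff SU : S = U by move=> z Uz; rewrite -SU in Uz; case: Uz.
  apply: hUc.
  - by exists z0.
  - exists (\bigcup_(b in [set b | P b /\ cvg (f k b.1 @[k --> \oo])]) ball b.1 b.2).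
      by apply: bigcup_open => b _; apply: ball_open.
    apply/seteqP; split => z.
      move=> [Uz cz]; split => //.
      have [r r0 [sub hu]] := hB z Uz.
      exists (z, r); first exact: (conj (conj r0 (conj sub hu)) cz).
      exact: ballxx.
    move=> [Uz [b [[b0 [sub hu]] cb] Bz]]; split => //.
    exact: (L2 b.1 b.2 b0 sub hu b.1 z (ballxx _ b0) Bz cb).
  - exists (~` \bigcup_(b in [set b | P b /\ ~ cvg (f k b.1 @[k --> \oo])]) ball b.1 b.2).
      by apply: open_closedC; apply: bigcup_open => b _; apply: ball_open.
    apply/seteqP; split => z.
      move=> [Uz cz]; split => //.
      move=> [b [[b0 [sub hu]] ncb] Bz]; apply: ncb.
      exact: (L2 b.1 b.2 b0 sub hu z b.1 Bz (ballxx _ b0) cz).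
    move=> [Uz nD]; split => //.
    apply: contrapT => ncz; apply: nD.
    have [r r0 [sub hu]] := hB z Uz.
    exists (z, r); first exact: (conj (conj r0 (conj sub hu)) ncz).
    exact: ballxx.
have hfU : forall z, U z -> f k z @[k --> \oo] --> lim (f k z @[k --> \oo]).
  by move=> z Uz; apply: L3.
split.
  move=> a r Ua r0 sub hu.
  exists (fun x => lim (f k x @[k --> \oo])) => eps eps0.
  have ca := L3 a Ua.
  have e30 : 0 < eps / 3 by apply: divr_gt0.
  have [N1 hN1] := cvg_cauchy_seq ca e30.
  have [N2 hN2] := L1 a r r0 sub hu (eps / 3 / r) (divr_gt0 e30 r0).
  exists (maxn N1 N2) => k hk z Bz.
  have hk1 : (N1 <= k)%N by apply: leq_trans hk; apply: leq_maxl.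
  have hk2 : (N2 <= k)%N by apply: leq_trans hk; apply: leq_maxr.
  have cz : cvg (f q z @[q --> \oo]) := L2 a r r0 sub hu a z (ballxx _ r0) Bz ca.
  apply: (@le_lt_trans _ _ (eps / 3 + eps / 3)); last by lra.
  apply: (@lim_norm_le _ _ (fun q => f k z - f q z)).
    by apply: cvgB => //; apply: cvg_cst.
  exists (maxn N1 N2) => q hq.
  have hq1 : (N1 <= q)%N by apply: leq_trans hq; apply: leq_maxl.
  have hq2 : (N2 <= q)%N by apply: leq_trans hq; apply: leq_maxr.
  have t1 := hN2 k q hk2 hq2 a z (ballxx _ r0) Bz.
  have t2 := hN1 k q hk1 hq1.
  have t3 : eps / 3 / r * `|z - a| <= eps / 3.
    move: Bz; rewrite -ball_normE /= distrC => Bz.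
    rewrite mulrAC ler_pdivrMr //; apply: ler_wpM2l; [exact: ltW | exact: ltW].
  have -> : f k z - f q z = (f k z - f q z - (f k a - f q a)) + (f k a - f q a) by rewrite subrK.
  apply: (le_trans (ler_normD _ _)); apply: lerD; first exact: le_trans t1 t3.
  exact: ltW.
pose F z := lim (f k z @[k --> \oo]).
pose G z := lim (fp k z @[k --> \oo]).
have hG : forall z, U z -> fp k z @[k --> \oo] --> G z.
  move=> z Uz; have [r r0 [sub [gl hgl]]] := hB z Uz.
  have h := unif_cvg_pt hgl (ballxx z r0).
  exact: (cvgP _ h).
exists F, G; split; first exact: hfU.
split; first exact: hG.
move=> z Uz.
have [r r0 [sub hu]] := hB z Uz.
pose L := MR halg (G z).
have Lb : forall h, `|L h| <= (C * `|G z|) * `|h| by move=> h; apply: hC.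
have Lc : continuous L := lin_bound_cont Lb.
have key : F \o shift z = cst (F z) + L +o_ 0 id.
  apply/eqaddoP => eps eps0.
  have e30 : 0 < eps / 3 by apply: divr_gt0.
  have [N1 hN1] := L1 z r r0 sub hu (eps / 3) e30.
  have [N2 _ hN2] := (cvgrPdist_le _ _).1 (hG z Uz) (eps / 3 / C) (divr_gt0 e30 C0).
  pose k := maxn N1 N2.
  have hk1 : (N1 <= k)%N by apply: leq_maxl.
  have hk2 : (N2 <= k)%N by apply: leq_maxr.
  have dk := (hf k z Uz).1.
  have hd := (eqaddoP _ _ _ _).1 (diff_locally dk) (eps / 3) e30.
  have hr0 := @nbhs0_lt _ A r r0.
  move: hd hr0; apply: filterS2 => h hdh hr.
  move: hdh; rewrite /= => hdh.
  have Bh : ball z r (h + z) by rewrite -ball_normE /= opprD addrCA subrr addr0 normrN.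
  have Uh := sub _ Bh.
  have -> : (F \o shift z - (cst (F z) + L)) h = F (h + z) - (F z + L h) by [].
  rewrite (id3 _ _ _ (f k (h + z)) (f k z) ('d (f k) z h)).
  apply: (le_trans (ler_normD _ _)).
  have -> : eps * `|h| = eps / 3 * `|h| + eps / 3 * `|h| + eps / 3 * `|h|.
    by rewrite -!mulrDl; congr (_ * _); lra.
  apply: lerD; first apply: (le_trans (ler_normD _ _)); first apply: lerD.
  - apply: (@lim_norm_le _ _ (fun q => f q (h + z) - f k (h + z) - (f q z - f k z))).
      by apply: cvgB; apply: cvgB => //; [apply: hfU | apply: cvg_cst | apply: hfU | apply: cvg_cst].
    exists N1 => q hq.
    have := hN1 q k hq hk1 z (h + z) (ballxx _ r0) Bh.
    by rewrite addrK.
  - exact: hdh.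
  - rewrite dform // /L /= -(mulBl halg).
    apply: (le_trans (hC _ _)); apply: ler_wpM2r => //.
    rewrite -ler_pdivlMl //.
    by rewrite mulrC distrC; apply: hN2.
have dFz : 'd F z = L :> (A -> A) := diff_unique Lc key.
have dF : differentiable F z by apply/diff_locallyP; rewrite dFz; split.
split; first split => //.
  move=> x y; rewrite dFz /L /=.
  by have [h1 _ _ _ _] := halg; rewrite h1.
rewrite /A_derivative dFz /L /=.
by have [_ _ h3 _ _] := halg; rewrite h3.
Qed.
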